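(* Fix integers $a,b\ge 2$, $\varepsilon>0$, and a family $\mathcal{T}$ of $a$-element multisets with elements in $[b]$. Let $n\to\infty$ and let $m=m(n)$ satisfy $m/n\to\infty$. For each $n$, let $C_M$ be a coloring $[n]\to[b]$ maximizing $p^C(\mathcal{T})$. Then all hypergraphs $H\in\mathcal{H}(a,n,m)$, except for $o\!\left(\binom{\binom{n}{a}}{m}\right)$ of them, satisfy $q(H)\le p^{C_M}(\mathcal{T})\,m\,(1+\varepsilon)$.
   Context: $\mathcal{H}(a,n,m)$ is the family of all $a$-uniform hypergraphs on vertex set $[n]$ with exactly $m$ hyperedges; $|\mathcal{H}(a,n,m)|=\binom{\binom{n}{a}}{m}$. A coloring $C:[n]\to[b]$ is an arbitrary map. For a coloring $C$, $n_j^C$ is the number of vertices of color $j$; the color multiset of a hyperedge $e$ is the multiset of colors $C(v)$, $v\in e$, with multiplicity. For an $a$-element multiset $T$, $I_T(j)$ is the multiplicity of $j$ in $T$ and $p^C(T)=\prod_{j=1}^b\binom{n_j^C}{I_T(j)}\big/\binom{n}{a}$; and $p^C(\mathcal{T})=\sum_{T\in\mathcal{T}}p^C(T)$. For $H\in\mathcal{H}(a,n,m)$, $q(H)$ is the maximum, over all colorings $C:[n]\to[b]$, of the number of hyperedges of $H$ whose color multiset with respect to $C$ belongs to $\mathcal{T}$ (equivalently, the largest number of hyperedges in a subhypergraph of $H$ admitting a $b$-coloring in which every hyperedge's color multiset lies in $\mathcal{T}$). *)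

(* Defs.v *)
From mathcomp Require Import all_boot all_order all_algebra.
From mathcomp Require Import reals.
Set Implicit Arguments. Unset Strict Implicit. Unset Printing Implicit Defensive.
Import Order.TTheory GRing.Theory Num.Theory.

(* Vertex set [n] = 'I_n, colors [b] = 'I_b.
   An a-element multiset over [b] is represented by its multiplicity function
   t : {ffun 'I_b -> 'I_a.+1} (t j = I_T(j)), with \sum_j t j = a. *)
Definition multiset (a b : nat) := {ffun 'I_b -> 'I_a.+1}.

Definition is_amultiset (a b : nat) (t : multiset a b) : bool :=
  \sum_(j < b) (t j : nat) == a.

Definition ncol (n b : nat) (C : {ffun 'I_n -> 'I_b}) (j : 'I_b) : nat :=
  #|[set v | C v == j]|.

Definition pC (R : realType) (a b n : nat) (calT : {set multiset a b})
    (C : {ffun 'I_n -> 'I_b}) : R :=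
  \sum_(t in calT)
     ((\prod_(j < b) ('C(ncol C j, t j))%:R) / ('C(n, a))%:R)%R.

Definition edge_ok (a b n : nat) (calT : {set multiset a b})
    (C : {ffun 'I_n -> 'I_b}) (e : {set 'I_n}) : bool :=
  [exists t in calT, [forall j : 'I_b, (t j : nat) == #|[set v in e | C v == j]| ]].

Definition hypergraphs (a n m : nat) : {set {set {set 'I_n}}} :=
  [set H : {set {set 'I_n}} | [forall e in H, #|e| == a] && (#|H| == m)].

Definition q (a b n : nat) (calT : {set multiset a b}) (H : {set {set 'I_n}}) : nat :=
  \max_(C : {ffun 'I_n -> 'I_b}) #|[set e in H | edge_ok calT C e]|.

(* Main.v *)
Require Import Defs.
From mathcomp Require Import all_boot all_order all_algebra.
From mathcomp Require Import reals.
From mathcomp Require Import zify ring lra.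
Import Order.TTheory GRing.Theory Num.Theory.
Set Implicit Arguments. Unset Strict Implicit. Unset Printing Implicit Defensive.

Lemma count_sup (U : finType) (A S : {set U}) m : S \subset A ->
  #|[set H : {set U} | [&& H \subset A, #|H| == m & S \subset H]]|
    <= 'C(#|A| - #|S|, m - #|S|).
Proof.
move=> SA.
have -> : #|A| - #|S| = #|A :\: S| by rewrite cardsD (setIidPr SA).
rewrite -cards_draws.
have inj : {in [set H : {set U} | [&& H \subset A, #|H| == m & S \subset H]] &,
              injective (fun H => H :\: S)}.
  move=> H1 H2; rewrite !inE => /and3P[_ _ s1] /and3P[_ _ s2] e.
  by rewrite -(setID H1 S) -(setID H2 S) e (setIidPr s1) (setIidPr s2).
rewrite -(card_in_imset inj); apply: subset_leq_card; apply/subsetP => B.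
case/imsetP => H; rewrite !inE => /and3P[hA /eqP hm sH] ->.
rewrite setSD //= cardsD (setIidPr sH) hm //.
Qed.


Lemma sum_core (U : finType) (A G : {set U}) m r : G \subset A ->
  \sum_(H in [set H : {set U} | (H \subset A) && (#|H| == m)]) 'C(#|H :&: G|, r)
    <= 'C(#|G|, r) * 'C(#|A| - r, m - r).
Proof.
move=> GA.
pose P (H S : {set U}) := (S \subset H :&: G) && (#|S| == r).
have E1 : forall H : {set U}, 'C(#|H :&: G|, r) = \sum_(S : {set U}) P H S.
  move=> H; rewrite -cards_draws -sum1dep_card /=.
  by rewrite big_mkcond /=; apply: eq_bigr => S _; rewrite /P; case: (_ && _).
under eq_bigr do rewrite E1.
rewrite exchange_big /=.
rewrite -cards_draws -sum1dep_card big_distrl /= [X in _ <= X]big_mkcond /=.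
apply: leq_sum => S _.
case hS: (S \subset G); case hr: (#|S| == r) => /=; last 3 first.
- rewrite big1 // => H _; rewrite /P hr andbF //.
- rewrite big1 // => H _; rewrite /P; case h: (S \subset H :&: G) => //=.
  by move: hS; rewrite (subset_trans h (subsetIr _ _)).
- rewrite big1 // => H _; rewrite /P hr andbF //.
rewrite mul1n.
have hr' := eqP hr; rewrite -[in X in _ <= X]hr'.
apply: leq_trans (count_sup m (subset_trans hS GA)).
rewrite -sum1_card big_mkcond /= [X in _ <= X]big_mkcond /=.
apply: leq_sum => H _; rewrite !inE /P subsetI hS andbT hr andbT.
by case: (H \subset A); case: (#|H| == m); case: (S \subset H).
Qed.


Lemma ffact_split N r k : N ^_ (r + k) = N ^_ r * (N - r) ^_ k.
Proof.
elim: k => [|k IH]; first by rewrite addn0 ffactn0 muln1.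
by rewrite addnS !ffactnSr IH subnDA mulnA.
Qed.

Lemma bin_ident N m r : r <= m -> 'C(N, m) * 'C(m, r) = 'C(N, r) * 'C(N - r, m - r).
Proof.
move=> rm.
have pos : 0 < r`! * (m - r)`! by rewrite muln_gt0 !fact_gt0.
apply/eqP; rewrite -(eqn_pmul2r pos); apply/eqP.
rewrite -mulnA bin_fact // bin_ffact.
rewrite mulnACA !bin_ffact.
by rewrite -ffact_split subnKC.
Qed.

Lemma ffact_ratio N M r : M <= N -> N ^ r * M ^_ r <= M ^ r * N ^_ r.
Proof.
move=> MN; elim: r => [|r IH]; first by rewrite !expn0 !ffactn0.
rewrite !ffactnSr !expnSr.
have h : N * (M - r) <= M * (N - r).
  rewrite !mulnBr [M * N]mulnC; apply: leq_sub2l; by rewrite leq_mul2r MN orbT.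
have := leq_mul IH h.
by rewrite mulnACA [X in _ <= X]mulnACA.
Qed.

Lemma ffact_lb n k : (n - k) ^ k <= n ^_ k.
Proof.
elim: k n => [|k IH] n; first by rewrite expn0 ffactn0.
rewrite ffactnS expnS; apply: leq_mul; first exact: leq_subr.
have e : n - k.+1 = n.-1 - k by lia.
by rewrite e; apply: IH.
Qed.

Lemma leq_expb m n e : m <= n -> m ^ e <= n ^ e.
Proof. by case: e => [|e] // mn; rewrite leq_exp2r. Qed.

Lemma ffact_ub n k : n ^_ k <= n ^ k.
Proof.
elim: k n => [|k IH] n; first by rewrite expn0 ffactn0.
rewrite ffactnS expnS; apply: leq_mul => //.
apply: leq_trans (IH n.-1) _; apply: leq_expb; exact: leq_pred.
Qed.

Lemma lowb (n a b : nat) (t nj : 'I_b -> nat) : 0 < a -> 0 < b ->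
  \sum_(j < b) t j = a -> (forall j, t j <= a) -> (forall j, n %/ b <= nj j) ->
  2 * a * b <= n ->
  'C(n, a) <= (8 * b) ^ a * (a`!) ^ b * \prod_(j < b) 'C(nj j, t j).
Proof.
move=> a0 b0 st ta hnj nb.
set s := n %/ b; set q := s %/ 2.
have s2a : 2 * a <= s by rewrite /s leq_divRL.
have q1 : 0 < q by rewrite /q divn_gt0 //; lia.
have n1 : n < s.+1 * b by apply: ltn_ceil.
have s1 : s < q.+1 * 2 by apply: ltn_ceil.
have q2 : q * 2 <= s by rewrite /q leq_divM.
have nq : n <= 8 * b * q by nia.
have h1 : 'C(n, a) <= n ^ a.
  apply: leq_trans (ffact_ub n a); rewrite -bin_ffact; apply: leq_pmulr; exact: fact_gt0.
apply: (leq_trans h1); apply: (leq_trans (leq_expb a nq)).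
rewrite expnMn -mulnA leq_mul2l; apply/orP; right.
have -> : q ^ a = \prod_(j < b) q ^ t j by rewrite -expn_sum st.
have -> : a`! ^ b = \prod_(j < b) a`! by rewrite prod_nat_const card_ord.
rewrite -big_split /=.
apply: leq_prod => j _.
have hq : q <= nj j - t j by have := hnj j; have := ta j; lia.
apply: (leq_trans (leq_expb _ hq)); apply: (leq_trans (ffact_lb _ _)).
rewrite -bin_ffact mulnC leq_mul2r; apply/orP; right; exact: leq_fact.
Qed.


Lemma union_bound (T I : finType) (S : {set T}) (P : pred I) (B : I -> {set T}) :
  (forall x, x \in S -> exists2 i, P i & x \in B i) ->
  #|S| <= \sum_(i | P i) #|B i|.
Proof.
move=> hS.
rewrite -sum1_card.
apply: (@leq_trans (\sum_(x in S) \sum_(i | P i) (x \in B i))).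
  apply: leq_sum => x xS; have [i Pi xi] := hS x xS.
  by rewrite (bigD1 i) //= xi.
apply: (@leq_trans (\sum_x \sum_(i | P i) (x \in B i))).
  by rewrite [X in _ <= X](bigID (fun x => x \in S)) /= leq_addr.
rewrite exchange_big /=; apply: leq_sum => i _.
by rewrite -sum1_card [X in _ <= X]big_mkcond /=.
Qed.

Lemma card_Et n b (C : {ffun 'I_n -> 'I_b}) (t : 'I_b -> nat) :
  #|[set e : {set 'I_n} | [forall j, t j == #|[set v in e | C v == j]|]]|
    <= \prod_(j < b) 'C(ncol C j, t j).
Proof.
pose f (e : {set 'I_n}) : {ffun 'I_b -> {set 'I_n}} := [ffun j => [set v in e | C v == j]].
have finj : injective f.
  move=> e1 e2 e; apply/setP => v.
  have := congr1 (fun g : {ffun 'I_b -> {set 'I_n}} => v \in g (C v)) e.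
  by rewrite /f !ffunE !inE eqxx !andbT.
rewrite -(card_imset _ finj).
pose F := fun j : 'I_b => [set S : {set 'I_n} | (S \subset [set v | C v == j]) && (#|S| == t j)].
have -> : \prod_(j < b) 'C(ncol C j, t j) = #|(family (fun j => mem (F j)) : simpl_pred _)|.
  rewrite card_family /image_mem foldr_map.
  have E : forall (g : 'I_b -> nat) (r : seq 'I_b),
      foldr (fun x => muln (g x)) 1 r = \prod_(x <- r) g x.
    move=> g; elim => [|x r IH]; first by rewrite big_nil.
    by rewrite big_cons -IH.
  rewrite E big_enum /=; apply: eq_bigr => j _.
  by rewrite /F -cards_draws /ncol; apply: eq_card => S; rewrite !inE.
apply: subset_leq_card; apply/subsetP => g /imsetP[e]; rewrite inE => /forallP he ->.
apply/familyP => j; rewrite /F /f ffunE inE; apply/andP; split.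
  by apply/subsetP => v; rewrite !inE => /andP[].
by rewrite (eqP (he j)).
Qed.

Lemma count_good n a b (calT : {set multiset a b}) (C : {ffun 'I_n -> 'I_b}) :
  #|[set e : {set 'I_n} | (#|e| == a) && edge_ok calT C e]|
    <= \sum_(t in calT) \prod_(j < b) 'C(ncol C j, t j).
Proof.
apply: (@leq_trans (\sum_(t in calT) #|[set e : {set 'I_n} | [forall j, (t j : nat) == #|[set v in e | C v == j]|]]|)); last first.
  by apply: leq_sum => t _; apply: card_Et.
apply: union_bound => e; rewrite inE => /andP[_ /existsP[t /andP[tT ht]]].
by exists t => //; rewrite inE.
Qed.

Definition C0 n b (b0 : 0 < b) : {ffun 'I_n -> 'I_b} :=
  [ffun v : 'I_n => Ordinal (ltn_pmod v b0)].

Lemma C0_size n b (b0 : 0 < b) (j : 'I_b) : n %/ b <= ncol (C0 n b0) j.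
Proof.
case: (posnP n) => [-> | n0]; first by rewrite div0n.
pose x0 : 'I_n := Ordinal n0.
pose f (i : 'I_(n %/ b)) : 'I_n := insubd x0 (i * b + j).
have fv : forall i : 'I_(n %/ b), val (f i) = i * b + j.
  move=> i; rewrite /f val_insubd.
  have : i * b + j < n.
    have hi := ltn_ord i; have hj := ltn_ord j.
    have : n %/ b * b <= n by apply: leq_divM.
    nia.
  by move=> ->.
have finj : injective f.
  move=> i1 i2 e; apply: val_inj; have := congr1 val e; rewrite !fv => /eqP.
  rewrite eqn_add2r eqn_mul2r; case/orP => [/eqP b00|/eqP //]; by rewrite b00 in b0.
rewrite -[X in X <= _](card_ord (n %/ b)) -(card_imset _ finj) /ncol.
apply: subset_leq_card; apply/subsetP => v /imsetP[i _ ->].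
rewrite inE /C0 ffunE; apply/eqP/val_inj => /=.
by rewrite fv modnMDl modn_small.
Qed.

Section RealPart.
Local Open Scope ring_scope.

Lemma step_a (R : realType) (P eps : R) (m X : nat) : 0 <= P -> 0 < eps ->
  P * m%:R * (1 + eps) < X%:R ->
  forall k : nat, k%:R <= eps * P * m%:R / 2 ->
  ((1 + eps / 2) * P) ^+ k * (m ^_ k)%:R <= (X ^_ k)%:R.
Proof.
move=> P0 e0 hX; elim => [|k IH] hk; first by rewrite expr0 mul1r ffactn0.
have hk' : k%:R <= eps * P * m%:R / 2 by apply: le_trans hk; rewrite ler_nat.
rewrite exprSr !ffactnSr !natrM mulrACA; apply: ler_pM => //.
- by apply: mulr_ge0; [apply: exprn_ge0; apply: mulr_ge0 => //; lra | exact: ler0n].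
- by apply: mulr_ge0 => //; apply: mulr_ge0 => //; lra.
- exact: IH.
have kX : (k < X)%N.
  rewrite -(ltr_nat R).
  have h : 0 <= P * m%:R by apply: mulr_ge0.
  have h' : 0 <= eps * (P * m%:R) by apply: mulr_ge0 => //; lra.
  rewrite !mulrA in h'.
  lra.

rewrite [X in _ <= X]natrB; last exact: ltnW.
case: (leqP k m) => km.
- rewrite natrB //.
  have h1 : 0 <= (1 + eps / 2) * P * k%:R by apply: mulr_ge0; [apply: mulr_ge0 => //; lra|].
  have h2 : 0 <= P * m%:R by apply: mulr_ge0.
  nra.
- rewrite (_ : (m - k)%N = 0%N); last by apply/eqP; rewrite subn_eq0 ltnW.
  rewrite mulr0 subr_ge0 ler_nat; exact: ltnW.
Qed.

Lemma step_b (R : realType) (P : R) (M N r : nat) : (M <= N)%N -> (0 < N)%N ->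
  M%:R <= P * N%:R -> ('C(M, r))%:R <= P ^+ r * ('C(N, r))%:R.
Proof.
move=> MN N0 hP.
have P0 : 0 <= P.
  have : 0 <= P * N%:R by apply: le_trans hP.
  by rewrite pmulr_lge0 // ltr0n.
have F0 : 0 < (r`!)%:R :> R by rewrite ltr0n fact_gt0.
rewrite -(ler_pM2r F0) -mulrA -!natrM !bin_ffact.
have NR : 0 < (N ^ r)%:R :> R by rewrite ltr0n expn_gt0 N0.
rewrite -(ler_pM2l NR) -natrM.
apply: le_trans (_ : ((M ^ r) * N ^_ r)%:R <= _).
  by rewrite ler_nat ffact_ratio.
rewrite natrM mulrA; apply: ler_wpM2r; first exact: ler0n.
rewrite !natrX -exprMn; apply: lerXn2r; rewrite ?nnegrE ?ler0n //.
  by apply: mulr_ge0 => //; exact: ler0n.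
by rewrite mulrC.
Qed.

Lemma step_a' (R : realType) (P eps : R) (m X r : nat) : 0 <= P -> 0 < eps ->
  P * m%:R * (1 + eps) < X%:R -> r%:R <= eps * P * m%:R / 2 ->
  ((1 + eps / 2) * P) ^+ r * ('C(m, r))%:R <= ('C(X, r))%:R.
Proof.
move=> P0 e0 hX hr.
have F0 : 0 < (r`!)%:R :> R by rewrite ltr0n fact_gt0.
rewrite -(ler_pM2r F0) -mulrA -!natrM !bin_ffact.
exact: step_a.
Qed.

Lemma percol (R : realType) (U : finType) (A G : {set U}) (m r : nat) (P eps : R) :
  G \subset A -> (0 < #|A|)%N -> 0 < P -> 0 < eps -> #|G|%:R <= P * #|A|%:R ->
  (r <= m)%N -> r%:R <= eps * P * m%:R / 2 ->
  (1 + eps / 2) ^+ r *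
    (#|[set H in [set H : {set U} | (H \subset A) && (#|H| == m)] |
         P * m%:R * (1 + eps) < #|H :&: G|%:R]|)%:R <= ('C(#|A|, m))%:R.
Proof.
move=> GA A0 P0 e0 hG rm hr.
set Hyp := [set H : {set U} | (H \subset A) && (#|H| == m)].
set bad := [set H in Hyp | _].
have hsum := sum_core m r GA.
have GN : (#|G| <= #|A|)%N by apply: subset_leq_card.
have key : ((1 + eps / 2) * P) ^+ r * ('C(m, r))%:R * (#|bad|)%:R
           <= (\sum_(H in Hyp) 'C(#|H :&: G|, r))%:R.
  rewrite mulr_natr -sumr_const natr_sum.
  apply: (@le_trans _ _ (\sum_(H in bad) ('C(#|H :&: G|, r))%:R)).
    apply: ler_sum => H; rewrite inE => /andP[_ hH].
    by apply: step_a' => //; exact: ltW.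
  rewrite big_mkcond [X in _ <= X]big_mkcond /=; apply: ler_sum => H _.
  rewrite inE; case: (H \in Hyp) => //=; case: (_ < _) => //.
have cpos : 0 < P ^+ r * ('C(m, r))%:R.
  by apply: mulr_gt0; [exact: exprn_gt0 | rewrite ltr0n bin_gt0].
rewrite -(ler_pM2r cpos).
apply: (@le_trans _ _ (('C(#|G|, r))%:R * ('C(#|A| - r, m - r))%:R)).
  apply: le_trans (_ : (\sum_(H in Hyp) 'C(#|H :&: G|, r))%:R <= _).
    apply: le_trans key; rewrite exprMn le_eqVlt; apply/orP; left; apply/eqP; ring.
  by rewrite -natrM ler_nat.
apply: le_trans (_ : P ^+ r * ('C(#|A|, r))%:R * ('C(#|A| - r, m - r))%:R <= _).
  apply: ler_wpM2r; first exact: ler0n.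
  exact: step_b.
rewrite -mulrA -natrM -bin_ident // natrM le_eqVlt; apply/orP; left; apply/eqP; ring.
Qed.


Lemma pC_mul (R : realType) a b n (calT : {set multiset a b}) (C : {ffun 'I_n -> 'I_b}) :
  (0 < 'C(n, a))%N ->
  pC R calT C * ('C(n, a))%:R = (\sum_(t in calT) \prod_(j < b) 'C(ncol C j, t j))%:R.
Proof.
move=> h; rewrite /pC mulr_suml natr_sum; apply: eq_bigr => t _.
rewrite mulfVK ?natr_prod //; by rewrite pnatr_eq0 -lt0n.
Qed.

Lemma bernoulli (R : realType) (x : R) k : 0 <= x -> 1 + k%:R * x <= (1 + x) ^+ k.
Proof.
move=> x0; elim: k => [|k IH]; first by rewrite mul0r addr0 expr0.
rewrite exprS -natr1.
have h : 0 <= k%:R * x by apply: mulr_ge0 => //; exact: ler0n.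
have h2 : (1 + x) * (1 + k%:R * x) <= (1 + x) * (1 + x) ^+ k.
  by apply: ler_wpM2l => //; lra.
have h3 : 0 <= x * (k%:R * x) by apply: mulr_ge0.
apply: le_trans h2; nra.
Qed.

Lemma pC_low (R : realType) a b (ha : (0 < a)%N) (hb : (0 < b)%N)
  (calT : {set multiset a b}) (hT : forall t, t \in calT -> is_amultiset t)
  (t0 : multiset a b) (t0T : t0 \in calT) n (nb : (2 * a * b <= n)%N) :
  1 / (((8 * b) ^ a * a`! ^ b)%N)%:R <= pC R calT (C0 n hb).
Proof.
set K := ((8 * b) ^ a * a`! ^ b)%N.
have an : (a <= n)%N.
  apply: leq_trans nb; rewrite mulnC mulnA; apply: leq_pmull; rewrite muln_gt0 hb //.
have N0 : (0 < 'C(n, a))%N by rewrite bin_gt0.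
have K0 : (0 < K)%N by rewrite /K muln_gt0 !expn_gt0 fact_gt0 muln_gt0 hb.
have hnat : ('C(n, a) <= K * \sum_(t in calT) \prod_(j < b) 'C(ncol (C0 n hb) j, t j))%N.
  have hl := @lowb n a b (fun j => (t0 j : nat)) (fun j => ncol (C0 n hb) j) ha hb
     (eqP (hT t0 t0T)) (fun j => (ltn_ord (t0 j) : (t0 j <= a)%N)) (fun j => C0_size n hb j) nb.
  apply: (leq_trans hl).
  rewrite leq_mul2l; apply/orP; right.
  by rewrite (bigD1 t0) //= leq_addr.
have NR : 0 < ('C(n, a))%:R :> R by rewrite ltr0n.
have KR : 0 < K%:R :> R by rewrite ltr0n.
rewrite ler_pdivrMr // -(ler_pM2r NR) mul1r mulrAC pC_mul // -natrM ler_nat mulnC; exact: hnat.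

Qed.

End RealPart.

Lemma exists_nat (R : realType) (x : R) : exists L : nat, (x < L%:R)%R.
Proof.
case: (lerP 0 x) => hx; first by exists (Num.bound x); apply: archi_boundP.
by exists 0%N.
Qed.

Lemma final_arith (b n j r D : nat) : (0 < j)%N -> (D <= n)%N -> (j * (b.+1 * n) <= r)%N ->
  (b ^ n * D <= 2 ^ (r %/ j))%N.
Proof.
move=> j0 Dn hr.
have h1 : (b.+1 * n <= r %/ j)%N by rewrite leq_divRL // mulnC.
apply: leq_trans (leq_pexp2l (isT : (0 < 2)%N) h1).
rewrite mulSnr expnD; apply: leq_mul.
  rewrite expnM; apply: leq_expb; exact: ltnW (ltn_expl _ (isT : (1 < 2)%N)).
apply: leq_trans Dn _; exact: ltnW (ltn_expl _ (isT : (1 < 2)%N)).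
Qed.

Unset Implicit Arguments.
Theorem lemma12 (R : realType) (a b : nat) (ha : (2 <= a)%N) (hb : (2 <= b)%N)
  (eps : R) (heps : (0 < eps)%R)
  (calT : {set multiset a b}) (hT : forall t, t \in calT -> is_amultiset t)
  (m : nat -> nat)
  (hm : forall K : nat, exists N : nat, forall n : nat, (N <= n)%N -> (K * n <= m n)%N)
  (CM : forall n : nat, {ffun 'I_n -> 'I_b})
  (hCM : forall (n : nat) (C : {ffun 'I_n -> 'I_b}),
           (pC R calT C <= pC R calT (CM n))%R) :
  forall delta : R, (0 < delta)%R ->
  exists N : nat, forall n : nat, (N <= n)%N ->
    ((#|[set H in hypergraphs a n (m n) |
         ~~ ((q calT H)%:R <= pC R calT (CM n) * (m n)%:R * (1 + eps))%R]|)%:R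
     <= delta * (#|hypergraphs a n (m n)|)%:R)%R.
Proof.
move=> delta d0.
case: (set_0Vmem calT) => [T0 | [t0 t0T]].
  exists 0%N => n _.
  have pC0 : pC R calT (CM n) = 0%R by rewrite /pC T0 big_set0.
  rewrite (_ : [set H in _ | _] = set0) ?cards0; last first.
    apply/setP => H; rewrite !inE pC0 !mul0r.
    rewrite /q big1 ?lexx ?andbF // => C _.
    apply/eqP; rewrite cards_eq0; apply/eqP/setP => e; rewrite !inE /edge_ok T0.
    by rewrite andbC; apply/negbTE/negP => /andP[/existsP[t]]; rewrite inE.
  by apply: mulr_ge0; [exact: ltW | exact: ler0n].
have a0 : (0 < a)%N by apply: leq_trans ha.
have b0 : (0 < b)%N by apply: leq_trans hb.
set K0 := ((8 * b) ^ a * a`! ^ b)%N.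
have K0pos : (0 < K0)%N by rewrite /K0 muln_gt0 !expn_gt0 fact_gt0 muln_gt0 b0.
have [L hL] := exists_nat (2 * K0%:R / eps).
have [j hj] := exists_nat (2 / eps).
have [D hD] := exists_nat (1 / delta).
have [N1 hN1] := hm (L * j * b.+1).
have L0 : (0 < L)%N.
  rewrite -(ltr_nat R); apply: le_lt_trans hL; apply: divr_ge0 => //; last exact: ltW.
  by apply: mulr_ge0 => //; exact: ler0n.
have j0 : (0 < j)%N.
  rewrite -(ltr_nat R); apply: le_lt_trans hj; apply: divr_ge0 => //; exact: ltW.
exists (maxn N1 (maxn (2 * a * b) D)) => n.
rewrite !geq_max => /and3P[nN1 nab nD].
set mm := m n.
set P := pC R calT (CM n).
have Plow : (1 / K0%:R <= P)%R := le_trans (pC_low R a0 b0 hT t0T nab) (hCM n (C0 n b0)).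
have K0R : (0 < K0%:R :> R)%R by rewrite ltr0n.
have P0 : (0 < P)%R by apply: lt_le_trans Plow; rewrite divr_gt0.
have PK : (1 <= P * K0%:R)%R by rewrite -ler_pdivrMr.
set A := [set e : {set 'I_n} | #|e| == a].
have cardA : #|A| = 'C(n, a) by rewrite card_draws card_ord.
have an : (a <= n)%N.
  apply: leq_trans nab; rewrite mulnC mulnA; apply: leq_pmull; rewrite muln_gt0 b0 //.
have A0 : (0 < #|A|)%N by rewrite cardA bin_gt0.
have hyp : hypergraphs a n mm = [set H : {set {set 'I_n}} | (H \subset A) && (#|H| == mm)].
  apply/setP => H; rewrite !inE; congr (_ && _).
  apply/forallP/subsetP => [h e eH | h e]; first by rewrite inE; have := h e; rewrite eH.
  by apply/implyP => eH; have := h e eH; rewrite inE.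
set r := (mm %/ L)%N.
have rm : (r <= mm)%N by apply: leq_div.
have mmK : (L * j * b.+1 * n <= mm)%N by apply: hN1.
have hr : (r%:R <= eps * P * mm%:R / 2)%R.
  have rL : (r%:R * L%:R <= mm%:R :> R)%R by rewrite -natrM ler_nat leq_divM.
  have Le : (2 * K0%:R < L%:R * eps :> R)%R by rewrite -ltr_pdivrMr.
  have r0 : (0 <= r%:R :> R)%R by exact: ler0n.
  have h1 : (eps * P * (r%:R * L%:R) <= eps * P * mm%:R)%R.
    by apply: ler_wpM2l => //; apply: mulr_ge0; exact: ltW.
  have h2 : (P * r%:R * (2 * K0%:R) <= P * r%:R * (L%:R * eps))%R.
    by apply: ler_wpM2l; [apply: mulr_ge0 => //; exact: ltW | exact: ltW].
  have h3 : (r%:R <= r%:R * (P * K0%:R))%R by apply: ler_peMr.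
  lra.
set G := fun C : {ffun 'I_n -> 'I_b} => [set e : {set 'I_n} | (#|e| == a) && edge_ok calT C e].
have GA : forall C, G C \subset A.
  by move=> C; apply/subsetP => e; rewrite !inE => /andP[].
have hG : forall C, ((#|G C|)%:R <= P * (#|A|)%:R :> R)%R.
  move=> C; apply: le_trans (_ : (pC R calT C * (#|A|)%:R <= _)%R); last first.
    by apply: ler_wpM2r; [exact: ler0n | exact: hCM].
  by rewrite cardA pC_mul -?cardA // ler_nat; apply: count_good.
set c := (1 + eps / 2)%R.
have perC := fun C => percol (GA C) A0 P0 heps (hG C) rm hr.
rewrite hyp cards_draws.
set Hyp := [set H : {set {set 'I_n}} | (H \subset A) && (#|H| == mm)].
set bad := [set H in Hyp | _].
set badC := fun C => [set H in Hyp | (P * mm%:R * (1 + eps) < #|H :&: G C|%:R)%R].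
have U : (#|bad| <= \sum_(C : {ffun 'I_n -> 'I_b}) #|badC C|)%N.
  apply: union_bound => H; rewrite inE => /andP[HH hq].
  have cpos : (0 < #|{ffun 'I_n -> 'I_b}|)%N by rewrite card_ffun card_ord expn_gt0 b0.
  have [C hC] := @bigop.eq_bigmax _ (fun C : {ffun 'I_n -> 'I_b} => #|[set e in H | edge_ok calT C e]|) cpos.
  exists C => //; rewrite inE HH /=.
  move: hq; rewrite /q hC -ltNge.
  suff -> : [set e in H | edge_ok calT C e] = H :&: G C by [].
  apply/setP => e; rewrite !inE; case eH: (e \in H) => //=.
  move: HH; rewrite inE => /andP[/subsetP HA _]; have := HA e eH; rewrite inE => -> //.
have cr0 : (0 < c ^+ r)%R by apply: exprn_gt0; rewrite /c; lra.
have S1 : (c ^+ r * (#|bad|)%:R <= (b ^ n)%:R * ('C(#|A|, mm))%:R)%R.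
  apply: le_trans (_ : (c ^+ r * (\sum_C #|badC C|)%:R <= _)%R).
    by apply: ler_wpM2l; [exact: ltW | rewrite ler_nat].
  rewrite natr_sum mulr_sumr.
  apply: le_trans (_ : (\sum_(C : {ffun 'I_n -> 'I_b}) ('C(#|A|, mm))%:R <= _)%R).
    by apply: ler_sum => C _; apply: perC.
  by rewrite sumr_const card_ffun !card_ord [X in (_ <= X)%R]mulr_natl.
have hc2 : (2 <= c ^+ j)%R.
  apply: le_trans (bernoulli j (_ : (0 <= eps / 2)%R)); last by lra.
  have : (2 < j%:R * eps)%R by rewrite -ltr_pdivrMr.
  lra.
have hrj : (j * (b.+1 * n) <= r)%N.
  rewrite leq_divRL //; apply: leq_trans mmK; apply: eq_leq.
  by rewrite mulnC !mulnA.
have fa := final_arith j0 nD hrj.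
have S2 : ((b ^ n * D)%:R <= c ^+ r :> R)%R.
  apply: le_trans (_ : (c ^+ (j * (r %/ j)) <= _)%R); last first.
    by apply: ler_weXn2l; [rewrite /c; lra | rewrite mulnC leq_divM].
  rewrite exprM.
  apply: le_trans (_ : ((2 : R) ^+ (r %/ j) <= _)%R).
    by rewrite -natrX ler_nat.
  by apply: lerXn2r; rewrite ?nnegrE //; lra.
have dD : (1 < delta * D%:R)%R by rewrite mulrC -ltr_pdivrMr // mul1r.
have S3 : ((b ^ n)%:R <= delta * c ^+ r :> R)%R.
  rewrite natrM in S2.
  have bn0 : (0 <= (b ^ n)%:R :> R)%R by exact: ler0n.
  nra.
rewrite -(ler_pM2l cr0).
apply: le_trans S1 _.
have Y0 : (0 <= ('C(#|A|, mm))%:R :> R)%R by exact: ler0n.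
rewrite mulrA [(c ^+ r * delta)%R]mulrC; apply: ler_wpM2r => //.
Qed.
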